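(* Let $(\mathfrak{h},\langle\cdot,\cdot\rangle)$ be a Kundt pair on $\mathfrak{sol}$. Then it is equivalent to $(\mathfrak{h}_0,\langle\cdot,\cdot\rangle_0)$ where, with matrices taken in the basis $(X_1,X_2,X_3)$, either (1) $\langle\cdot,\cdot\rangle_0=\begin{pmatrix}\lambda&0&0\\0&0&-1\\0&-1&0\end{pmatrix}$, $\lambda>0$, and $\mathfrak{h}_0=\mathrm{span}\{X_2,X_1\}$ or $\mathfrak{h}_0=\mathrm{span}\{X_3,X_1\}$; (2) $\langle\cdot,\cdot\rangle_0=\begin{pmatrix}\lambda^2&0&0\\0&\lambda&1\\0&1&0\end{pmatrix}$, $\lambda\neq 0$, and $\mathfrak{h}_0=\mathrm{span}\{X_3,X_1\}$; (3) $\langle\cdot,\cdot\rangle_0=\begin{pmatrix}0&0&-\frac{2}{b}\\0&1&1\\-\frac{2}{b}&1&1\end{pmatrix}$, $b>0$, and $\mathfrak{h}_0=\mathrm{span}\{X_2,X_3\}$; or (4) $\langle\cdot,\cdot\rangle_0=\begin{pmatrix}0&0&1\\0&1&0\\1&0&0\end{pmatrix}$ and $\mathfrak{h}_0=\mathrm{span}\{X_2,X_3\}$.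
   Context: $\mathfrak{sol}$ has basis $(X_1,X_2,X_3)$ with only nonzero brackets $[X_1,X_2]=X_2$, $[X_1,X_3]=-X_3$. For a Lorentzian scalar product $\langle\cdot,\cdot\rangle$ on a Lie algebra $\mathfrak{g}$, the Levi-Civita product is defined by $2\langle u\bullet v,w\rangle=\langle[u,v],w\rangle+\langle[w,u],v\rangle+\langle[w,v],u\rangle$. A Kundt pair on $\mathfrak{g}$ is a pair consisting of a Lorentzian scalar product $\langle\cdot,\cdot\rangle$ and a codimension one subalgebra $\mathfrak{h}$ which is $\langle\cdot,\cdot\rangle$-degenerate, stable by $\bullet$, and such that $e\bullet e=0$ for all $e\in\mathfrak{h}^\perp$. Two Kundt pairs $(\mathfrak{h}_1,\langle\cdot,\cdot\rangle_1)$, $(\mathfrak{h}_2,\langle\cdot,\cdot\rangle_2)$ are equivalent if there is a Lie algebra automorphism $\phi$ of $\mathfrak{g}$ with $\phi(\mathfrak{h}_1)=\mathfrak{h}_2$ and $\phi^*\langle\cdot,\cdot\rangle_2=\langle\cdot,\cdot\rangle_1$. *)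

(* Defs.v *)
(* The Lie algebra sol = R^3 (row vectors 'rV[R]_3) with
   basis X1 = e_0, X2 = e_1, X3 = e_2.  Scalar products are given by their
   Gram matrix G in this basis; a linear map phi is u |-> u *m A. *)
From HB Require Import structures.
From mathcomp Require Import all_boot all_order all_algebra.
From mathcomp Require Import reals.
Set Implicit Arguments. Unset Strict Implicit. Unset Printing Implicit Defensive.
Import Order.TTheory GRing.Theory Num.Theory.
Local Open Scope ring_scope.

Section Sol.
Variable R : realType.

Definition X1 : 'rV[R]_3 := delta_mx 0 0.
Definition X2 : 'rV[R]_3 := delta_mx 0 1.
Definition X3 : 'rV[R]_3 := delta_mx 0 2.

(* Lie bracket of sol: [X1,X2] = X2, [X1,X3] = -X3, [X2,X3] = 0 *)
Definition sol_br (u v : 'rV[R]_3) : 'rV[R]_3 :=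
  (u 0 0 * v 0 1 - u 0 1 * v 0 0) *: X2 - (u 0 0 * v 0 2 - u 0 2 * v 0 0) *: X3.

Definition sp (G : 'M[R]_3) (u v : 'rV[R]_3) : R := (u *m G *m v^T) 0 0.

Definition lorentzian (G : 'M[R]_3) : Prop :=
  G^T = G /\ exists P : 'M[R]_3, P \in unitmx /\
     P *m G *m P^T = diag_mx (\row_(i < 3) if i == 0 then -1 else 1).

(* w = u • v (Levi-Civita product), characterized by its defining identity *)
Definition is_lc (G : 'M[R]_3) (u v w : 'rV[R]_3) : Prop :=
  forall z : 'rV[R]_3,
    2 * sp G w z = sp G (sol_br u v) z + sp G (sol_br z u) v + sp G (sol_br z v) u.

Definition memh (H : 'M[R]_3) (u : 'rV[R]_3) : Prop := (u <= H)%MS.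

Definition kundt_pair (H G : 'M[R]_3) : Prop :=
  lorentzian G /\ \rank H = 2%N /\
  [/\
      (forall u v, memh H u -> memh H v -> memh H (sol_br u v)),
      (exists u, memh H u /\ u != 0 /\ forall v, memh H v -> sp G u v = 0),
      (forall u v w, memh H u -> memh H v -> is_lc G u v w -> memh H w) &
      (forall e, (forall v, memh H v -> sp G e v = 0) -> is_lc G e e 0)].

Definition sol_aut (A : 'M[R]_3) : Prop :=
  A \in unitmx /\ forall u v, sol_br (u *m A) (v *m A) = sol_br u v *m A.

Definition kundt_equiv (H1 G1 H2 G2 : 'M[R]_3) : Prop :=
  exists A : 'M[R]_3, sol_aut A /\ (H1 *m A == H2)%MS /\ A *m G2 *m A^T = G1.

Definition mx3 (a b c d e f g h i : R) : 'M[R]_3 :=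
  \matrix_(r < 3, s < 3)
    nth 0 (nth [::] [:: [:: a; b; c]; [:: d; e; f]; [:: g; h; i]] r) s.

Definition span2 (x y : 'rV[R]_3) : 'M[R]_3 := col_mx x (col_mx y 0).

End Sol.

(* Main.v *)
Require Import Defs.
From HB Require Import structures.
From mathcomp Require Import all_boot all_order all_algebra.
From mathcomp Require Import reals.
From mathcomp Require Import ring lra.
Set Implicit Arguments. Unset Strict Implicit. Unset Printing Implicit Defensive.
Import Order.TTheory GRing.Theory Num.Theory.
Local Open Scope ring_scope.

Section S.
Variable R : realType.

Definition r3 (x y z : R) : 'rV[R]_3 := \row_(j < 3) nth 0 [:: x; y; z] j.

Lemma mx3K (M : 'M[R]_3) : M = mx3 (M 0 0) (M 0 1) (M 0 2) (M 1 0) (M 1 1) (M 1 2) (M 2 0) (M 2 1) (M 2 2).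
Proof.
apply/matrixP => i j; rewrite !mxE.
by case: i => [[|[|[|i]]] Hi] //=; case: j => [[|[|[|j]]] Hj] //=; congr (M _ _); apply: val_inj.
Qed.

Lemma r3K (v : 'rV[R]_3) : v = r3 (v 0 0) (v 0 1) (v 0 2).
Proof.
apply/matrixP => i j; rewrite !mxE ord1.
by case: j => [[|[|[|j]]] Hj] //=; congr (v _ _); apply: val_inj.
Qed.

Lemma X1E : X1 R = r3 1 0 0.
Proof. apply/matrixP => i j; rewrite !mxE ord1; by case: j => [[|[|[|j]]] Hj]. Qed.
Lemma X2E : X2 R = r3 0 1 0.
Proof. apply/matrixP => i j; rewrite !mxE ord1; by case: j => [[|[|[|j]]] Hj]. Qed.
Lemma X3E : X3 R = r3 0 0 1.
Proof. apply/matrixP => i j; rewrite !mxE ord1; by case: j => [[|[|[|j]]] Hj]. Qed.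

Lemma r3E0 x y z : r3 x y z 0 0 = x. Proof. by rewrite mxE. Qed.
Lemma r3E1 x y z : r3 x y z 0 1 = y. Proof. by rewrite mxE. Qed.
Lemma r3E2 x y z : r3 x y z 0 2 = z. Proof. by rewrite mxE. Qed.

Lemma det3 (M : 'M[R]_3) : \det M =
  M 0 0 * (M 1 1 * M 2 2 - M 1 2 * M 2 1)
  - M 0 1 * (M 1 0 * M 2 2 - M 1 2 * M 2 0)
  + M 0 2 * (M 1 0 * M 2 1 - M 1 1 * M 2 0).
Proof.
set a := M 0 0. set b := M 0 1. set c := M 0 2. set d := M 1 0. set e := M 1 1.
set f := M 1 2. set g := M 2 0. set h := M 2 1. set k := M 2 2.
rewrite [M]mx3K -/a -/b -/c -/d -/e -/f -/g -/h -/k.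
rewrite (expand_det_row _ 0) !big_ord_recr big_ord0 /= /cofactor /=.
rewrite !(expand_det_row _ 0) !big_ord_recr !big_ord0 /= /cofactor /=.
rewrite !det_mx11 !mxE /=.
ring.
Qed.

Notation M3 := (@mx3 R).
Definition c3 (x y z : R) : 'cV[R]_3 := \col_(i < 3) nth 0 [:: x; y; z] i.

Ltac ord3 i := let Hi := fresh "Hi" in case: i => [[|[|[|i]]] Hi] //=.

Lemma mulmx33 a1 a2 a3 a4 a5 a6 a7 a8 a9 b1 b2 b3 b4 b5 b6 b7 b8 b9 :
  M3 a1 a2 a3 a4 a5 a6 a7 a8 a9 *m M3 b1 b2 b3 b4 b5 b6 b7 b8 b9 =
  mx3 (a1*b1+a2*b4+a3*b7) (a1*b2+a2*b5+a3*b8) (a1*b3+a2*b6+a3*b9)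
      (a4*b1+a5*b4+a6*b7) (a4*b2+a5*b5+a6*b8) (a4*b3+a5*b6+a6*b9)
      (a7*b1+a8*b4+a9*b7) (a7*b2+a8*b5+a9*b8) (a7*b3+a8*b6+a9*b9).
Proof.
apply/matrixP => i j; rewrite !mxE !big_ord_recr big_ord0 /= !mxE /=.
ord3 i; ord3 j; ring.
Qed.

Lemma trM3 a1 a2 a3 a4 a5 a6 a7 a8 a9 :
  (M3 a1 a2 a3 a4 a5 a6 a7 a8 a9)^T = M3 a1 a4 a7 a2 a5 a8 a3 a6 a9.
Proof. apply/matrixP => i j; rewrite !mxE; ord3 i; ord3 j. Qed.

Lemma mulr3mx3 x y z a1 a2 a3 a4 a5 a6 a7 a8 a9 :
  r3 x y z *m M3 a1 a2 a3 a4 a5 a6 a7 a8 a9 =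
  r3 (x*a1+y*a4+z*a7) (x*a2+y*a5+z*a8) (x*a3+y*a6+z*a9).
Proof.
apply/matrixP => i j; rewrite !mxE !big_ord_recr big_ord0 /= !mxE /=.
ord3 j; ring.
Qed.

Lemma mulmx3c3 x y z a1 a2 a3 a4 a5 a6 a7 a8 a9 :
  M3 a1 a2 a3 a4 a5 a6 a7 a8 a9 *m c3 x y z =
  c3 (a1*x+a2*y+a3*z) (a4*x+a5*y+a6*z) (a7*x+a8*y+a9*z).
Proof.
apply/matrixP => i j; rewrite !mxE !big_ord_recr big_ord0 /= !mxE /=.
ord3 i; ring.
Qed.

Lemma mulr3c3 x y z x' y' z' :
  r3 x y z *m c3 x' y' z' = (x*x'+y*y'+z*z')%:M.
Proof.
apply/matrixP => i j; rewrite !mxE !big_ord_recr big_ord0 /= !mxE /= !ord1 /=.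
ring.
Qed.

Lemma trr3 x y z : (r3 x y z)^T = c3 x y z.
Proof. by apply/matrixP => i j; rewrite !mxE. Qed.

Lemma scalec3 k x y z : k *: c3 x y z = c3 (k*x) (k*y) (k*z).
Proof. apply/matrixP => i j; rewrite !mxE; ord3 i. Qed.

Lemma r3_eq x y z x' y' z' : x = x' -> y = y' -> z = z' -> r3 x y z = r3 x' y' z'.
Proof. by move=> -> -> ->. Qed.
Lemma c3_eq x y z x' y' z' : x = x' -> y = y' -> z = z' -> c3 x y z = c3 x' y' z'.
Proof. by move=> -> -> ->. Qed.
Lemma mx3_eq a1 a2 a3 a4 a5 a6 a7 a8 a9 b1 b2 b3 b4 b5 b6 b7 b8 b9 :
  a1 = b1 -> a2 = b2 -> a3 = b3 -> a4 = b4 -> a5 = b5 -> a6 = b6 -> a7 = b7 -> a8 = b8 -> a9 = b9 ->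
  M3 a1 a2 a3 a4 a5 a6 a7 a8 a9 = M3 b1 b2 b3 b4 b5 b6 b7 b8 b9.
Proof. by move=> -> -> -> -> -> -> -> -> ->. Qed.

Lemma brE x y z x' y' z' :
  sol_br (r3 x y z) (r3 x' y' z') = r3 0 (x*y'-y*x') (-(x*z'-z*x')).
Proof.
rewrite /sol_br X2E X3E; apply/matrixP => i j; rewrite !mxE /=; ord3 j; ring.
Qed.

Lemma spE x y z x' y' z' a1 a2 a3 a4 a5 a6 a7 a8 a9 :
  sp (M3 a1 a2 a3 a4 a5 a6 a7 a8 a9) (r3 x y z) (r3 x' y' z') =
  x*(a1*x'+a2*y'+a3*z') + y*(a4*x'+a5*y'+a6*z') + z*(a7*x'+a8*y'+a9*z').
Proof.
rewrite /sp mulr3mx3 trr3 mulr3c3 mxE /=; ring.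
Qed.

Lemma span2E (x y : 'rV[R]_3) : span2 x y =
  mx3 (x 0 0) (x 0 1) (x 0 2) (y 0 0) (y 0 1) (y 0 2) 0 0 0.
Proof.
apply/matrixP => i j; rewrite !mxE.
case: splitP => k /=.
  rewrite ord1 => ->; ord3 j; congr (x _ _); exact: val_inj.
move=> ik; rewrite mxE; case: splitP => l /=.
  rewrite ord1 => kl; rewrite ik kl /=; ord3 j; congr (y _ _); exact: val_inj.
move=> kl; rewrite mxE ik kl /=.
case: l {kl} => [[|l] Hl] //=; ord3 j.
Qed.


Lemma pid2E : (pid_mx 2 : 'M[R]_3) = M3 1 0 0 0 1 0 0 0 0.
Proof. apply/matrixP => i j; rewrite !mxE; ord3 i; ord3 j. Qed.

Lemma rank2 (M Q : 'M[R]_3) : M *m Q = M3 1 0 0 0 1 0 0 0 0 -> (2 <= \rank M)%N.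
Proof.
move=> MQ; have := mxrankM_maxl M Q; rewrite MQ -pid2E rank_pid_mx //.
Qed.

Lemma rankN (N : 'cV[R]_3) : N != 0 -> \rank N = 1%N.
Proof.
move=> N0; apply/eqP; rewrite eqn_leq rank_leq_col lt0n mxrank_eq0 N0.
by [].
Qed.

Lemma kerE (M : 'M[R]_3) (N : 'cV[R]_3) :
  M *m N = 0 -> (2 <= \rank M)%N -> N != 0 -> (M == kermx N)%MS.
Proof.
move=> MN rM N0.
have sM : (M <= kermx N)%MS by rewrite sub_kermx MN.
rewrite -(mxrank_leqif_eq sM) mxrank_ker rankN //.
rewrite eqn_leq rM andbT.
by have := mxrankS sM; rewrite mxrank_ker rankN.
Qed.

Lemma equivP (H G H0 G0 A : 'M[R]_3) (N N0 : 'cV[R]_3) k :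
  \rank H = 2%N -> H *m N = 0 -> (H0 == kermx N0)%MS -> N0 != 0 ->
  sol_aut A -> A *m N0 = k *: N -> A *m G0 *m A^T = G -> kundt_equiv H G H0 G0.
Proof.
move=> rH HN H0k N00 [Au Aaut] AN AG.
exists A; split; first by split.
split=> //.
have HA : (H *m A == kermx N0)%MS.
  apply: kerE => //; last by rewrite mxrankMfree ?row_free_unit // rH.
  by rewrite -mulmxA AN -scalemxAr HN scaler0.
apply/eqmxP; apply: eqmx_trans (eqmxP HA) (eqmx_sym (eqmxP H0k)).
Qed.

Lemma aut1 p q al be : al != 0 -> be != 0 -> sol_aut (M3 1 p q 0 al 0 0 0 be).
Proof.
move=> a0 b0; split.
  rewrite unitmxE unitfE det3 !mxE /=.
  by rewrite (_ : _ + _ = al * be); [rewrite mulf_neq0 | ring].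
move=> u v; rewrite [u]r3K [v]r3K !mulr3mx3 !brE mulr3mx3; apply: r3_eq; ring.
Qed.

Lemma aut2 p q al be : al != 0 -> be != 0 -> sol_aut (M3 (-1) p q 0 0 al 0 be 0).
Proof.
move=> a0 b0; split.
  rewrite unitmxE unitfE det3 !mxE /=.
  by rewrite (_ : _ + _ = al * be); [rewrite mulf_neq0 | ring].
move=> u v; rewrite [u]r3K [v]r3K !mulr3mx3 !brE mulr3mx3; apply: r3_eq; ring.
Qed.


Lemma c30 : c3 0 0 0 = 0.
Proof. apply/matrixP => i j; rewrite !mxE; ord3 i. Qed.

Lemma span2E' x1 x2 x3 y1 y2 y3 : span2 (r3 x1 x2 x3) (r3 y1 y2 y3) = M3 x1 x2 x3 y1 y2 y3 0 0 0.
Proof. by rewrite span2E !mxE. Qed.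

Ltac c3nz i := apply/eqP => h; have := congr1 (fun M : 'cV[R]_3 => M i 0) h;
  rewrite !mxE /=; apply/eqP; exact: oner_neq0.

Lemma H0_21 : (span2 (X2 R) (X1 R) == kermx (c3 0 0 1))%MS.
Proof.
rewrite X2E X1E span2E'; apply: kerE.
- by rewrite mulmx3c3 -c30; apply: c3_eq; ring.
- by apply: (@rank2 _ (M3 0 1 0 1 0 0 0 0 0)); rewrite mulmx33; apply: mx3_eq; ring.
- c3nz (2 : 'I_3).
Qed.

Lemma H0_31 : (span2 (X3 R) (X1 R) == kermx (c3 0 1 0))%MS.
Proof.
rewrite X3E X1E span2E'; apply: kerE.
- by rewrite mulmx3c3 -c30; apply: c3_eq; ring.
- by apply: (@rank2 _ (M3 0 1 0 0 0 0 1 0 0)); rewrite mulmx33; apply: mx3_eq; ring.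
- c3nz (1 : 'I_3).
Qed.

Lemma H0_23 : (span2 (X2 R) (X3 R) == kermx (c3 1 0 0))%MS.
Proof.
rewrite X2E X3E span2E'; apply: kerE.
- by rewrite mulmx3c3 -c30; apply: c3_eq; ring.
- by apply: (@rank2 _ (M3 0 0 0 1 0 0 0 1 0)); rewrite mulmx33; apply: mx3_eq; ring.
- c3nz (0 : 'I_3).
Qed.


Ltac fld := field; repeat (apply/andP; split); try assumption; try (by rewrite pnatr_eq0).

Lemma T1 (H : 'M[R]_3) (a b c al x : R) : \rank H = 2%N -> H *m c3 x 0 0 = 0 ->
  al != 0 -> c != 0 -> x != 0 ->
  kundt_equiv H (M3 a b c b (al^+2) 0 c 0 0) (span2 (X2 R) (X3 R)) (M3 0 0 1 0 1 0 1 0 0).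
Proof.
move=> rH HN a0 c0 x0.
apply: (@equivP _ _ _ _ (M3 1 (b/al) ((a - (b/al)^+2)/2) 0 al 0 0 0 c) _ (c3 1 0 0) (1/x) rH HN H0_23).
- c3nz (0 : 'I_3).
- exact: aut1.
- by rewrite mulmx3c3 scalec3; apply: c3_eq; fld.
- by rewrite trM3 !mulmx33; apply: mx3_eq; fld.
Qed.


Lemma T2 (H : 'M[R]_3) (a b c be x : R) : \rank H = 2%N -> H *m c3 x 0 0 = 0 ->
  be != 0 -> b != 0 -> x != 0 ->
  kundt_equiv H (M3 a b c b 0 0 c 0 (be^+2)) (span2 (X2 R) (X3 R)) (M3 0 0 1 0 1 0 1 0 0).
Proof.
move=> rH HN b0 c0 x0.
apply: (@equivP _ _ _ _ (M3 (-1) (c/be) (((c/be)^+2 - a)/2) 0 0 (-b) 0 be 0) _ (c3 1 0 0) (-1/x) rH HN H0_23).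
- c3nz (0 : 'I_3).
- by apply: aut2; rewrite ?oppr_eq0.
- by rewrite mulmx3c3 scalec3; apply: c3_eq; fld.
- by rewrite trM3 !mulmx33; apply: mx3_eq; fld.
Qed.

Lemma T3 (H : 'M[R]_3) (a b c al r x : R) : \rank H = 2%N -> H *m c3 x 0 0 = 0 ->
  al != 0 -> r != 0 -> c + r * b != 0 -> x != 0 ->
  let s := 2 * r * al / (c + r * b) in
  kundt_equiv H (M3 a b c b (al^+2) (-(al^+2 * r)) c (-(al^+2 * r)) (al^+2 * r^+2))
    (span2 (X2 R) (X3 R)) (M3 0 0 (- (2 / s)) 0 1 1 (- (2 / s)) 1 1).
Proof.
move=> rH HN a0 r0 cb0 x0 s.
have s0 : s != 0 by rewrite /s !mulf_neq0 ?invr_eq0 ?pnatr_eq0.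
set q := s * ((b/al)^+2 - a) / 4.
apply: (@equivP _ _ _ _ (M3 1 (b/al - q) q 0 al 0 0 0 (-(r*al))) _ (c3 1 0 0) (1/x) rH HN H0_23).
- c3nz (0 : 'I_3).
- by apply: aut1; rewrite ?oppr_eq0 ?mulf_neq0.
- by rewrite mulmx3c3 scalec3; apply: c3_eq; fld.
- rewrite trM3 !mulmx33; apply: mx3_eq; rewrite /q /s; fld.
Qed.


Lemma T4 (H : 'M[R]_3) (a b c e t : R) : \rank H = 2%N -> H *m c3 (b*t) 0 (e*t) = 0 ->
  e != 0 -> t != 0 ->
  kundt_equiv H (M3 a b c b 0 e c e 0) (span2 (X2 R) (X1 R))
     (M3 (a - 2*b*c/e) 0 0 0 0 (-1) 0 (-1) 0).
Proof.
move=> rH HN e0 t0.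
apply: (@equivP _ _ _ _ (M3 1 (c/e) (-b) 0 1 0 0 0 (-e)) _ (c3 0 0 1) (-1/t) rH HN H0_21).
- c3nz (2 : 'I_3).
- by apply: aut1; rewrite ?oppr_eq0 ?oner_eq0.
- by rewrite mulmx3c3 scalec3; apply: c3_eq; fld.
- by rewrite trM3 !mulmx33; apply: mx3_eq; fld.
Qed.

Lemma T5 (H : 'M[R]_3) (a b c e t : R) : \rank H = 2%N -> H *m c3 (c*t) (e*t) 0 = 0 ->
  e != 0 -> t != 0 ->
  kundt_equiv H (M3 a b c b 0 e c e 0) (span2 (X3 R) (X1 R))
     (M3 (a - 2*b*c/e) 0 0 0 0 (-1) 0 (-1) 0).
Proof.
move=> rH HN e0 t0.
apply: (@equivP _ _ _ _ (M3 1 (c/e) (-b) 0 1 0 0 0 (-e)) _ (c3 0 1 0) (1/(e*t)) rH HN H0_31).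
- c3nz (1 : 'I_3).
- by apply: aut1; rewrite ?oppr_eq0 ?oner_eq0.
- by rewrite mulmx3c3 scalec3; apply: c3_eq; fld.
- by rewrite trM3 !mulmx33; apply: mx3_eq; fld.
Qed.

Lemma T6 (H : 'M[R]_3) (a b c e la be t : R) : \rank H = 2%N -> H *m c3 (b*t) 0 (e*t) = 0 ->
  e != 0 -> t != 0 -> la != 0 -> be != 0 ->
  a = la^+2 - la * (b*be/e)^+2 + 2*b*c/e ->
  kundt_equiv H (M3 a b c b 0 e c e (be^+2 * la)) (span2 (X3 R) (X1 R))
     (M3 (la^+2) 0 0 0 la 1 0 1 0).
Proof.
move=> rH HN e0 t0 l0 b0 ->.
set al := e / be. set p := b / al.
apply: (@equivP _ _ _ _ (M3 (-1) p (c/be - p*la) 0 0 al 0 be 0) _ (c3 0 1 0) (be/(e*t)) rH HN H0_31).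
- c3nz (1 : 'I_3).
- by apply: aut2; rewrite // /al mulf_neq0 ?invr_eq0.
- by rewrite mulmx3c3 scalec3; apply: c3_eq; rewrite /p /al; fld.
- by rewrite trM3 !mulmx33; apply: mx3_eq; rewrite /p /al; fld.
Qed.

Lemma T7 (H : 'M[R]_3) (a b c e la al t : R) : \rank H = 2%N -> H *m c3 (c*t) (e*t) 0 = 0 ->
  e != 0 -> t != 0 -> la != 0 -> al != 0 ->
  a = la^+2 - la * (c*al/e)^+2 + 2*b*c/e ->
  kundt_equiv H (M3 a b c b (al^+2 * la) e c e 0) (span2 (X3 R) (X1 R))
     (M3 (la^+2) 0 0 0 la 1 0 1 0).
Proof.
move=> rH HN e0 t0 l0 a0 ->.
set be := e / al. set p := c / be.
apply: (@equivP _ _ _ _ (M3 1 p (b/al - p*la) 0 al 0 0 0 be) _ (c3 0 1 0) (al/(e*t)) rH HN H0_31).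
- c3nz (1 : 'I_3).
- by apply: aut1; rewrite // /be mulf_neq0 ?invr_eq0.
- by rewrite mulmx3c3 scalec3; apply: c3_eq; rewrite /p /be; fld.
- by rewrite trM3 !mulmx33; apply: mx3_eq; rewrite /p /be; fld.
Qed.


Lemma r30 : r3 0 0 0 = 0.
Proof. apply/matrixP => i j; rewrite !mxE; ord3 j. Qed.

Lemma mx1_0 (x : R) : x = 0 -> (x%:M : 'M[R]_1) = 0.
Proof. by move=> ->; apply/matrixP => i j; rewrite !mxE mul0rn. Qed.

Lemma mx1_0' (x : R) : (x%:M : 'M[R]_1) = 0 -> x = 0.
Proof. by move/matrixP/(_ 0 0); rewrite !mxE eqxx mulr1n. Qed.

Lemma pos_of (x y : R) : 0 < x^+2 * y -> 0 < y /\ x != 0.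
Proof.
move=> h; have x0 : x != 0 by apply: contraTneq h => ->; rewrite expr0n mul0r ltxx.
split=> //; move: h; rewrite pmulr_rgt0 // exprn_even_gt0 //.
Qed.

Lemma sign_sqrt (K s : R) : 0 < K -> s != 0 ->
  exists la, [/\ la^+2 = K, la != 0, 0 < s * la & 0 < s / la].
Proof.
move=> K0 s0.
have sK : 0 < Num.sqrt K by rewrite sqrtr_gt0.
have sq : Num.sqrt K ^+ 2 = K by rewrite sqr_sqrtr // ltW.
have iK : 0 < (Num.sqrt K)^-1 by rewrite invr_gt0.
have [sp|sn] := boolP (0 < s).
  exists (Num.sqrt K); split => //; [exact: lt0r_neq0 | exact: mulr_gt0 | exact: divr_gt0].
have sneg : s < 0 by rewrite -leNgt in sn; rewrite lt_neqAle s0 sn.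
exists (- Num.sqrt K); split; first by rewrite sqrrN.
- by rewrite oppr_eq0 lt0r_neq0.
- nra.
- rewrite invrN mulrN; nra.
Qed.

Lemma main (H G : 'M[R]_3) :
  kundt_pair H G ->
  (exists lam : R, 0 < lam /\
     (kundt_equiv H G (span2 (X2 R) (X1 R)) (mx3 lam 0 0 0 0 (-1) 0 (-1) 0) \/
      kundt_equiv H G (span2 (X3 R) (X1 R)) (mx3 lam 0 0 0 0 (-1) 0 (-1) 0)))
  \/ (exists lam : R, lam != 0 /\
     kundt_equiv H G (span2 (X3 R) (X1 R)) (mx3 (lam ^+ 2) 0 0 0 lam 1 0 1 0))
  \/ (exists b : R, 0 < b /\
     kundt_equiv H G (span2 (X2 R) (X3 R))
       (mx3 0 0 (- (2 / b)) 0 1 1 (- (2 / b)) 1 1))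
  \/ kundt_equiv H G (span2 (X2 R) (X3 R)) (mx3 0 0 1 0 1 0 1 0 0).
Proof.
move=> [[Gsym [P [Pu PGP]]] [rH [Hsub [u [uh [un0 uperp]]] _ Hee]]].
have gs i j : G j i = G i j by move/matrixP: Gsym => /(_ i j); rewrite mxE.
have GE : G = M3 (G 0 0) (G 0 1) (G 0 2) (G 0 1) (G 1 1) (G 1 2) (G 0 2) (G 1 2) (G 2 2).
  by rewrite {1}[G]mx3K (gs 0 1) (gs 0 2) (gs 1 2).
move: GE; move: (G 0 0) (G 0 1) (G 0 2) (G 1 1) (G 1 2) (G 2 2) => a b c d e f GE.
subst G; clear gs.
have uE := r3K u; move: uE; move: (u 0 0) (u 0 1) (u 0 2) => u0 u1 u2 uE; subst u.
have hdet : (a*(d*f - e*e) - b*(b*f - e*c) + c*(b*e - d*c)) * (\det P)^+2 = -1.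
  have := congr1 determinant PGP; rewrite !det_mulmx det_tr det_diag.
  rewrite !big_ord_recr big_ord0 /= ?mxE /=.
  rewrite [\det (M3 _ _ _ _ _ _ _ _ _)]det3 ?mxE /= => h.
  transitivity (\det P * (a*(d*f - e*e) - b*(b*f - e*c) + c*(b*e - d*c)) * \det P); first ring.
  by rewrite h; ring.
have Dlt : a*(d*f - e*e) - b*(b*f - e*c) + c*(b*e - d*c) < 0.
  move: hdet; set D := _ - _ + _; set dP := \det P => hdet.
  have := sqr_ge0 dP; nra.
clear Gsym P Pu PGP hdet.
set N := c3 (a*u0+b*u1+c*u2) (b*u0+d*u1+e*u2) (c*u0+e*u1+f*u2).
have HN : H *m N = 0.
  apply/row_matrixP => i; rewrite row_mul row0.
  have := uperp _ (row_sub i H); move: (row i H) => v.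
  rewrite [v]r3K spE /N mulr3c3 => h; apply: mx1_0; rewrite -h; ring.
have N0 : N != 0.
  apply/eqP => N0.
  have Gu : (M3 a b c b d e c e f) \in unitmx.
    by rewrite unitmxE unitfE det3 !mxE /= ltr0_neq0.
  have : M3 a b c b d e c e f *m (r3 u0 u1 u2)^T = N by rewrite trr3 mulmx3c3.
  rewrite N0 => h; have := mulKmx Gu (r3 u0 u1 u2)^T; rewrite h mulmx0 => /esym /eqP.
  by rewrite trmx_eq0 (negbTE un0).
have hker : (H == kermx N)%MS by apply: kerE => //; rewrite rH.
have mem x y z : memh H (r3 x y z) <-> x*(a*u0+b*u1+c*u2) + y*(b*u0+d*u1+e*u2) + z*(c*u0+e*u1+f*u2) = 0.
  rewrite /memh (eqmxP hker) sub_kermx /N mulr3c3; split => [/eqP/mx1_0' //| h].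
  by rewrite (mx1_0 h).
have E1 := Hee _ uperp (r3 1 0 0).
have E2 := Hee _ uperp (r3 0 1 0).
have E3 := Hee _ uperp (r3 0 0 1).
rewrite -r30 !brE !spE in E1 E2 E3.
have Sb := Hsub (r3 (b*u0+d*u1+e*u2) (-(a*u0+b*u1+c*u2)) 0) (r3 0 (c*u0+e*u1+f*u2) (-(b*u0+d*u1+e*u2))).
rewrite brE !mem in Sb.
have uu := uperp _ uh; rewrite spE in uu.
set n0 := a*u0+b*u1+c*u2 in mem Sb E1 E2 E3 uu.
set n1 := b*u0+d*u1+e*u2 in mem Sb E1 E2 E3 uu.
set n2 := c*u0+e*u1+f*u2 in mem Sb E1 E2 E3 uu.
have En0 : n0 = a*u0+b*u1+c*u2 by [].
have En1 : n1 = b*u0+d*u1+e*u2 by [].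
have En2 : n2 = c*u0+e*u1+f*u2 by [].
clearbody n0 n1 n2.
have e1 : u1*n1 - u2*n2 = 0 by lra.
have e2 : u0*n1 = 0 by lra.
have e3 : u0*n2 = 0 by lra.
have S2 : n1 * (n1 * n2) = 0.
  have := Sb ltac:(ring) ltac:(ring) => h.
  have : 2 * (n1 * (n1 * n2)) = 0 by rewrite -h; ring.
  by move/eqP; rewrite mulf_eq0 pnatr_eq0 /= => /eqP.
have S : n1 * n2 = 0 by move/eqP: S2; rewrite mulf_eq0 => /orP [/eqP ->|/eqP //]; rewrite mul0r.
clear Sb E1 E2 E3 Hsub Hee.
have HN' : H *m c3 n0 n1 n2 = 0 by rewrite En0 En1 En2.
have N0' : c3 n0 n1 n2 != 0 by rewrite En0 En1 En2.
clear HN N0 hker mem uperp uh; clear N.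
have [n1z|n1nz] := eqVneq n1 0; have [n2z|n2nz] := eqVneq n2 0.
- (* h = n *)
  have n0nz : n0 != 0 by apply: contraNneq N0' => h; rewrite h n1z n2z c30.
  have u0z : u0 = 0.
    by move/eqP: uu; rewrite n1z n2z !mulr0 !addr0 mulf_eq0 (negbTE n0nz) orbF => /eqP.
  rewrite n1z n2z in HN'.
  right; right.
  have [u1z|u1nz] := eqVneq u1 0.
  + have u2nz : u2 != 0 by apply: contraNneq un0 => h; rewrite u0z u1z h r30.
    have ez : e = 0.
      by move/eqP: En1; rewrite n1z u0z u1z !mulr0 !add0r eq_sym mulf_eq0 (negbTE u2nz) orbF => /eqP.
    have fz : f = 0.
      by move/eqP: En2; rewrite n2z u0z u1z ez !mulr0 ?mul0r !add0r eq_sym mulf_eq0 (negbTE u2nz) orbF => /eqP.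
    subst e f.
    have [dpos cnz] : 0 < d /\ c != 0 by apply: pos_of; lra.
    right.
    have al0 : Num.sqrt d != 0 by rewrite lt0r_neq0 // sqrtr_gt0.
    have := @T1 H a b c (Num.sqrt d) n0 rH HN' al0 cnz n0nz.
    by rewrite sqr_sqrtr // ltW.
  + have [u2z|u2nz] := eqVneq u2 0.
    * have dz : d = 0.
        by move/eqP: En1; rewrite n1z u0z u2z !mulr0 !add0r addr0 eq_sym mulf_eq0 (negbTE u1nz) orbF => /eqP.
      have ez : e = 0.
        by move/eqP: En2; rewrite n2z u0z u2z !mulr0 !add0r addr0 eq_sym mulf_eq0 (negbTE u1nz) orbF => /eqP.
      subst d e.
      have [fpos bnz] : 0 < f /\ b != 0 by apply: pos_of; lra.
      right.
      have be0 : Num.sqrt f != 0 by rewrite lt0r_neq0 // sqrtr_gt0.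
      have := @T2 H a b c (Num.sqrt f) n0 rH HN' be0 bnz n0nz.
      by rewrite sqr_sqrtr // ltW.
    * set r := u1 / u2.
      have h1 : d*u1 + e*u2 = 0 by rewrite -n1z En1 u0z; ring.
      have h2 : e*u1 + f*u2 = 0 by rewrite -n2z En2 u0z; ring.
      have eE : e = -(d*r).
        apply: (mulIf u2nz); rewrite (_ : -(d*r)*u2 = -(d*u1)); [lra | rewrite /r; fld].
      have fE : f = d*r^+2.
        apply: (mulIf u2nz); rewrite (_ : d*r^+2*u2 = -(e*u1)); [lra | rewrite eE /r; fld].
      have r0 : r != 0 by rewrite /r mulf_neq0 ?invr_eq0.
      clearbody r; subst e f.
      have [dpos cb0] : 0 < d /\ c + r * b != 0 by apply: pos_of; lra.
      have [al [alsq al0 salp _]] := @sign_sqrt d (r / (c + r*b)) dpos (mulf_neq0 r0 (invr_neq0 cb0)).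
      left; exists (2 * r * al / (c + r * b)); split.
        by rewrite (_ : _ / _ = 2 * (r/(c+r*b)*al)); [apply: mulr_gt0 | fld].
      have := @T3 H a b c al r n0 rH HN' al0 r0 cb0 n0nz; rewrite /= alsq; apply.
-
  have u0z : u0 = 0 by move/eqP: e3; rewrite mulf_eq0 (negbTE n2nz) orbF => /eqP.
  have u2z : u2 = 0.
    by move/eqP: e1; rewrite n1z mulr0 sub0r oppr_eq0 mulf_eq0 (negbTE n2nz) orbF => /eqP.
  have u1nz : u1 != 0 by apply: contraNneq un0 => h; rewrite u0z u2z h r30.
  have dz : d = 0.
    by move/eqP: En1; rewrite n1z u0z u2z !mulr0 add0r addr0 eq_sym mulf_eq0 (negbTE u1nz) orbF => /eqP.
  have enz : e != 0 by apply: contraNneq n2nz => h; rewrite En2 u0z u2z h; apply/eqP; ring.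
  have hN : c3 n0 n1 n2 = c3 (b*u1) 0 (e*u1).
    by apply: c3_eq; [rewrite En0 u0z u2z; ring | exact: n1z | rewrite En2 u0z u2z; ring].
  rewrite hN in HN'; subst d.
  have [fz|fnz] := eqVneq f 0.
  + subst f; left; exists (a - 2*b*c/e); split; last by left; exact: (@T4 H a b c e u1 rH HN' enz u1nz).
    have [] // : 0 < a - 2*b*c/e /\ e != 0.
    by apply: pos_of; rewrite (_ : _ * _ = a*e^+2 - 2*b*c*e); [lra | fld].
  + set K := a + b^+2*f/e^+2 - 2*b*c/e.
    have [Kpos _] : 0 < K /\ e != 0.
      by apply: pos_of; rewrite (_ : _ * _ = a*e^+2 + b^+2*f - 2*b*c*e); [lra | rewrite /K; fld].
    have [la [lasq la0 _ sla]] := @sign_sqrt K f Kpos fnz.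
    set be := Num.sqrt (f/la).
    have besq : be^+2 = f/la by rewrite sqr_sqrtr // ltW.
    have be0 : be != 0 by rewrite lt0r_neq0 // sqrtr_gt0.
    have hf : be^+2 * la = f by rewrite besq divfK.
    have ha : a = la^+2 - la*(b*be/e)^+2 + 2*b*c/e.
      rewrite lasq /K (_ : la*(b*be/e)^+2 = b^+2*f/e^+2); first by fld.
      by rewrite expr_div_n exprMn besq; fld.
    right; left; exists la; split=> //.
    by have := @T6 H a b c e la be u1 rH HN' enz u1nz la0 be0 ha; rewrite hf.
-
  have u0z : u0 = 0 by move/eqP: e2; rewrite mulf_eq0 (negbTE n1nz) orbF => /eqP.
  have u1z : u1 = 0.
    by move/eqP: e1; rewrite n2z mulr0 subr0 mulf_eq0 (negbTE n1nz) orbF => /eqP.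
  have u2nz : u2 != 0 by apply: contraNneq un0 => h; rewrite u0z u1z h r30.
  have fz : f = 0.
    by move/eqP: En2; rewrite n2z u0z u1z !mulr0 !add0r eq_sym mulf_eq0 (negbTE u2nz) orbF => /eqP.
  have enz : e != 0 by apply: contraNneq n1nz => h; rewrite En1 u0z u1z h; apply/eqP; ring.
  have hN : c3 n0 n1 n2 = c3 (c*u2) (e*u2) 0.
    by apply: c3_eq; [rewrite En0 u0z u1z; ring | rewrite En1 u0z u1z; ring | exact: n2z].
  rewrite hN in HN'; subst f.
  have [dz|dnz] := eqVneq d 0.
  + subst d; left; exists (a - 2*b*c/e); split; last by right; exact: (@T5 H a b c e u2 rH HN' enz u2nz).
    have [] // : 0 < a - 2*b*c/e /\ e != 0.
    by apply: pos_of; rewrite (_ : _ * _ = a*e^+2 - 2*b*c*e); [lra | fld].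
  + set K := a + c^+2*d/e^+2 - 2*b*c/e.
    have [Kpos _] : 0 < K /\ e != 0.
      by apply: pos_of; rewrite (_ : _ * _ = a*e^+2 + c^+2*d - 2*b*c*e); [lra | rewrite /K; fld].
    have [la [lasq la0 _ sla]] := @sign_sqrt K d Kpos dnz.
    set al := Num.sqrt (d/la).
    have alsq : al^+2 = d/la by rewrite sqr_sqrtr // ltW.
    have al0 : al != 0 by rewrite lt0r_neq0 // sqrtr_gt0.
    have hd : al^+2 * la = d by rewrite alsq divfK.
    have ha : a = la^+2 - la*(c*al/e)^+2 + 2*b*c/e.
      rewrite lasq /K (_ : la*(c*al/e)^+2 = c^+2*d/e^+2); first by fld.
      by rewrite expr_div_n exprMn alsq; fld.
    right; left; exists la; split=> //.
    by have := @T7 H a b c e la al u2 rH HN' enz u2nz la0 al0 ha; rewrite hd.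
- by move/eqP: S; rewrite mulf_eq0 (negbTE n1nz) (negbTE n2nz).
Qed.

End S.

Unset Implicit Arguments.
Set Strict Implicit.

Theorem theorem5p4 (R : realType) (H G : 'M[R]_3) :
  kundt_pair H G ->
  (exists lam : R, 0 < lam /\
     (kundt_equiv H G (span2 (X2 R) (X1 R)) (mx3 lam 0 0 0 0 (-1) 0 (-1) 0) \/
      kundt_equiv H G (span2 (X3 R) (X1 R)) (mx3 lam 0 0 0 0 (-1) 0 (-1) 0)))
  \/ (exists lam : R, lam != 0 /\
     kundt_equiv H G (span2 (X3 R) (X1 R)) (mx3 (lam ^+ 2) 0 0 0 lam 1 0 1 0))
  \/ (exists b : R, 0 < b /\
     kundt_equiv H G (span2 (X2 R) (X3 R))
       (mx3 0 0 (- (2 / b)) 0 1 1 (- (2 / b)) 1 1))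
  \/ kundt_equiv H G (span2 (X2 R) (X3 R)) (mx3 0 0 1 0 1 0 1 0 0).
Proof. exact: (@main R H G). Qed.
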